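(* For $k\ge0$ let $\mathcal R^{(N,k)}(x)=\mathcal R^{(N+k-1)}(x)\cdots\mathcal R^{(N)}(x)$ (with $\mathcal R^{(N,0)}=\mathrm{Id}$) and $D_k^{(N)}(x)=\mathcal R^{(N,k)}(x)^{-1}\mathcal D^{(N+k)}(x)\mathcal R^{(N,k)}(x)$, so that $W_1^{(N+k)}(x.E)={\rm Tr}\,D_k^{(N)}(x)M^{(N)}(x.E)$. Then there exist polynomials $\alpha_k^{(N)}(x)\in\mathbb C[x]$, $k=0,\dots,\dim\mathfrak g$, not all zero and independent of $E$, such that $\sum_k\alpha_k^{(N)}D_k^{(N)}=0$ and for every $E\in\mathfrak g$ $$\sum_{k=0}^{\dim\mathfrak g}\alpha_k^{(N)}(x)W_1^{(N+k)}(x.E)=0 .$$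
   Context: Let $G\subset GL(r,\mathbb C)$ be a complex reductive Lie group given in a faithful matrix representation, with Lie algebra $\mathfrak g\subset\mathfrak{gl}(r,\mathbb C)$; ${\rm Tr}$ is the matrix trace. For each integer $N$ let $\mathcal D^{(N)}(x)\in\mathfrak g$ be rational in $x$, let $\Psi^{(N)}(x)$ be an invertible $G$-valued solution of $\frac{d}{dx}\Psi^{(N)}=\mathcal D^{(N)}\Psi^{(N)}$ (on a common simply connected domain avoiding all poles), and assume $\Psi^{(N+1)}(x)=\mathcal R^{(N)}(x)\Psi^{(N)}(x)$ with $\mathcal R^{(N)}(x)$ an invertible matrix, rational in $x$, with rational inverse. For $E\in\mathfrak g$, $M^{(N)}(x.E)=\Psi^{(N)}(x)E\Psi^{(N)}(x)^{-1}$ and $W_1^{(N)}(x.E)={\rm Tr}\,\mathcal D^{(N)}(x)M^{(N)}(x.E)$. *)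

(* Defs.v *)
From mathcomp Require Import all_boot all_order all_algebra.
From mathcomp Require Import all_classical all_reals all_analysis.
From mathcomp Require Import complex.
Import Order.TTheory GRing.Theory Num.Theory numFieldNormedType.Exports.

Set Implicit Arguments.
Unset Strict Implicit.
Unset Printing Implicit Defensive.

Local Open Scope ring_scope.
Local Open Scope classical_set_scope.

Definition rational_mx_on (K : fieldType) (m n : nat) (U : set K)
    (f : K -> 'M[K]_(m, n)) : Prop :=
  exists (P : 'M[{poly K}]_(m, n)) (q : {poly K}),
    q != 0 /\
    forall x, U x -> q.[x] != 0 /\ f x = q.[x]^-1 *: map_mx (fun p => p.[x]) P.

Definition matrix_group (K : fieldType) (r : nat) (G : set 'M[K]_r) : Prop :=
  (forall A, G A -> A \in unitmx) /\
  G 1%:M /\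
  (forall A B, G A -> G B -> G (A *m B)) /\
  (forall A, G A -> G (invmx A)).

(* X is a tangent vector at the identity of the matrix group G: the complex
   derivative at 0 of a holomorphic-at-0 curve gamma with gamma(0) = 1 and
   gamma(t) in G for t near 0.  The Lie algebra of G is the set of these. *)
Definition lie_tangent (R : realType) (r : nat) (G : set 'M[R[i]]_r)
    (X : 'M[R[i]]_r) : Prop :=
  exists gamma : (R[i])^o -> 'M[R[i]]_r,
    gamma 0 = 1%:M /\
    (\forall t \near (0 : (R[i])^o), G (gamma t)) /\
    is_derive (0 : (R[i])^o) (1 : R[i]) gamma X.

Fixpoint Rprod (K : ringType) (r : nat) (Rf : int -> K -> 'M[K]_r)
    (N : int) (k : nat) (x : K) : 'M[K]_r :=
  match k with
  | 0%N => 1%:M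
  | k'.+1 => Rf (N + k'%:Z) x *m Rprod Rf N k' x
  end.

Definition Dk (K : comUnitRingType) (r : nat) (D Rf : int -> K -> 'M[K]_r)
    (N : int) (k : nat) (x : K) : 'M[K]_r :=
  invmx (Rprod Rf N k x) *m D (N + k%:Z) x *m Rprod Rf N k x.

Definition Mfun (K : comUnitRingType) (r : nat) (Psi : int -> K -> 'M[K]_r)
    (N : int) (E : 'M[K]_r) (x : K) : 'M[K]_r :=
  Psi N x *m E *m invmx (Psi N x).

Definition W1 (K : comUnitRingType) (r : nat) (D Psi : int -> K -> 'M[K]_r)
    (N : int) (E : 'M[K]_r) (x : K) : K :=
  \tr (D N x *m Mfun Psi N E x).

(* Main.v *)
Require Import Defs.
From mathcomp Require Import all_boot all_order all_algebra.
From mathcomp Require Import all_classical all_reals all_analysis.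
From mathcomp Require Import complex.
Import Order.TTheory GRing.Theory Num.Theory numFieldNormedType.Exports.
Local Open Scope ring_scope.
Local Open Scope classical_set_scope.
Import VectorInternalTheory.
Definition fden (Rd : idomainType) (x : {fraction Rd}) : Rd := (frac (repr x)).2.
Definition fnum (Rd : idomainType) (x : {fraction Rd}) : Rd := (frac (repr x)).1.
Arguments fden {Rd}.
Arguments fnum {Rd}.

Lemma fden_neq0 (Rd : idomainType) (x : {fraction Rd}) : fden x != 0.
Proof. exact: denom_ratioP. Qed.

Lemma fdenE (Rd : idomainType) (x : {fraction Rd}) :
  x * @tofrac _ (fden x) = @tofrac _ (fnum x).
Proof.
rewrite /fden /fnum -[x in x * _]reprK.
unlock tofrac.
rewrite !piE.
apply/eqmodP => /=.
rewrite FracField.equivfE /FracField.mulf /=.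
rewrite !numden_Ratio ?mulf_neq0 ?oner_neq0 ?denom_ratioP //=.
by rewrite !mulr1 mulrC.
Qed.

Lemma helper4 (F : comRingType) (a b c e : F) : a * b * c * e = b * c * (a * e).
Proof. by rewrite -!mulrA mulrCA [a * (c * e)]mulrCA. Qed.

Lemma poly_dep (K : fieldType) (m n : nat) (L : 'M[K]_(m, m))
    (p : 'I_n.+1 -> 'rV[{poly K}]_m) :
  (m - \rank L <= n)%N -> (forall k, p k *m map_mx polyC L = 0) ->
  exists beta : 'I_n.+1 -> {poly K},
    (exists k, beta k != 0) /\ \sum_k beta k *: p k = 0.
Proof.
move=> hrk hp.
pose F := {fraction {poly K}}.
pose A : 'M[{poly K}]_(n.+1, m) := \matrix_k p k.
have hA : A *m map_mx polyC L = 0.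
  by apply/row_matrixP => k; rewrite row_mul rowK row0 hp.
pose AF := map_mx (@tofrac _) A.
pose LF := map_mx (@tofrac _ \o polyC) L.
have hAF : AF *m LF = 0.
  by rewrite /LF map_mx_comp -map_mxM hA map_mx0.
have rAF : (\rank AF <= n)%N.
  have : (AF <= kermx LF)%MS by rewrite sub_kermx hAF.
  move/mxrankS; rewrite mxrank_ker mxrank_map => h.
  exact: leq_trans h hrk.
have nfree : ~~ row_free AF.
  by rewrite /row_free; apply/negP => /eqP h; move: rAF; rewrite h ltnn.
pose v := nz_row (kermx AF).
have v0 : v != 0 by rewrite nz_row_eq0 kermx_eq0.
have vA : v *m AF = 0.
  have /submxP [Dm ->] : (v <= kermx AF)%MS by exact: nz_row_sub.
  by rewrite -mulmxA mulmx_ker mulmx0.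
pose d k := fden (v 0 k).
pose nu k := fnum (v 0 k).
pose beta k := nu k * \prod_(j | j != k) d j.
exists beta; split.
  have [k vk] : exists k, v 0 k != 0.
    case/boolP: [exists k, v 0 k != 0] => [/existsP//|/existsPn H].
    case/eqP: v0; apply/matrixP => i k; rewrite mxE (ord1 i).
    by move/negPn: (H k) => /eqP.
  exists k; rewrite /beta mulf_neq0 //.
    rewrite -(@tofrac_eq0 _) -fdenE.
    have h2 : @tofrac _ (fden (v 0 k)) != 0 by rewrite tofrac_eq0; exact: fden_neq0.
    exact: (@mulf_neq0 F _ _ vk h2).
  rewrite prodf_seq_neq0; apply/allP => j _; apply/implyP => _; exact: fden_neq0.
apply/rowP => j; rewrite mxE summxE.
have -> : \sum_k (beta k *: p k) 0 j = \sum_k beta k * A k j.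
  by apply: eq_bigr => k _; rewrite !mxE.
have h : @tofrac _ (\sum_k beta k * A k j) = 0.
  rewrite rmorph_sum /=.
  have -> : \sum_k @tofrac _ (beta k * A k j) =
     \sum_k @tofrac _ (\prod_k d k) * (v 0 k * AF k j).
    apply: eq_bigr => k _.
    have e : \prod_k0 d k0 = d k * \prod_(j0 | j0 != k) d j0 by rewrite (bigD1 k).
    rewrite /beta (tofracM (nu k * \prod_(j0 | j0 != k) d j0) (A k j)) (tofracM (nu k) (\prod_(j0 | j0 != k) d j0)) /nu -fdenE e (tofracM (d k) (\prod_(j0 | j0 != k) d j0)).
    have eA : AF k j = @tofrac _ (A k j) by rewrite mxE.
    rewrite eA; exact: (@helper4 F).
  rewrite -big_distrr /=.
  have -> : \sum_k v 0 k * AF k j = (v *m AF) 0 j by rewrite mxE.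
  by rewrite vA mxE mulr0.
by move/eqP: h; rewrite tofrac_eq0 => /eqP.
Qed.
Lemma poly_eq0_open (K : numFieldType) (U : set K^o) (x0 : K) (p : {poly K}) :
  open U -> U x0 -> (forall x, U x -> p.[x] = 0) -> p = 0.
Proof.
move=> oU Ux0 hp.
have : nbhs (x0 : K^o) U by rewrite nbhsE /=; exists U => //; split.
move=> /nbhs_ballP [e e0 hb].
pose f (i : nat) : K := x0 + e / (i.+2)%:R.
have fU i : U (f i).
  apply: hb; rewrite /ball /= /f opprD addNKr normrN ger0_norm.
    by rewrite ltr_pdivrMr // ltr_pMr // ltr1n.
  by rewrite divr_ge0 // ltW.
have finj : injective f.
  move=> a b /addrI /(mulfI (lt0r_neq0 e0)) /invr_inj /eqP.
  by rewrite eqr_nat eqSS eqSS => /eqP.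
apply: (@roots_geq_poly_eq0 _ p [seq f i | i <- iota 0 (size p)]).
- by apply/allP => y /mapP [i _ ->]; apply/rootP; apply: hp.
- by rewrite map_inj_uniq ?iota_uniq.
- by rewrite size_map size_iota.
Qed.
Lemma rational_mul (K : fieldType) (m n p : nat) (U : set K)
  (f : K -> 'M[K]_(m, n)) (g : K -> 'M[K]_(n, p)) :
  rational_mx_on U f -> rational_mx_on U g ->
  rational_mx_on U (fun x => f x *m g x).
Proof.
move=> [P1 [q1 [q10 h1]]] [P2 [q2 [q20 h2]]].
exists (P1 *m P2), (q1 * q2); split; first by rewrite mulf_neq0.
move=> x Ux; have [n1 e1] := h1 x Ux; have [n2 e2] := h2 x Ux.
split; first by rewrite hornerM mulf_neq0.
rewrite e1 e2 -scalemxAl -scalemxAr scalerA hornerM invfM mulrC.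
congr (_ *: _); symmetry; exact: (map_mxM (horner_eval x)).
Qed.

Lemma rational_1 (K : fieldType) (n : nat) (U : set K) :
  rational_mx_on U (fun _ => (1%:M : 'M[K]_n)).
Proof.
exists 1%:M, 1; split; first exact: oner_neq0.
move=> x _; rewrite hornerC invr1 scale1r; split; first exact: oner_neq0.
by rewrite (map_scalar_mx (horner_eval x)) /= horner_evalE hornerC.
Qed.

Lemma invmxM' (K : comUnitRingType) n (A B : 'M[K]_n) :
  A \in unitmx -> B \in unitmx -> invmx (A *m B) = invmx B *m invmx A.
Proof.
move=> uA uB; have uAB : A *m B \in unitmx by rewrite unitmx_mul uA.
rewrite -[RHS]mul1mx -(mulVmx uAB) -!mulmxA (mulmxA B) mulmxV // mul1mx.
by rewrite mulmxV // mulmx1.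
Qed.
Lemma cvg_bigsum (T : Type) (F : set_system T) (FF : Filter F)
  (K : numFieldType) (W : normedModType K) (I : Type) (s : seq I) (P : pred I)
  (f : I -> T -> W) (l : I -> W) :
  (forall i, f i @ F --> l i) ->
  (fun x => \sum_(i <- s | P i) f i x) @ F --> \sum_(i <- s | P i) l i.
Proof.
move=> hf; elim: s => [|a s IH].
  under eq_fun do rewrite big_nil; rewrite big_nil; exact: cvg_cst.
under eq_fun do rewrite big_cons; rewrite big_cons.
case: (P a) => //; exact: cvgD.
Qed.

Lemma mulmx_cont (K : numFieldType) (m n p q : nat) (B : 'M[K]_(m, n))
  (C : 'M[K]_(p, q)) : continuous (fun M : 'M[K]_(n, p) => B *m M *m C).
Proof.
move=> M0.
have e : (fun M : 'M[K]_(n, p) => B *m M *m C) = (fun M =>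
   \sum_(i < n) \sum_(j < p) M i j *: (B *m delta_mx i j *m C)).
  apply: funext => M; rewrite {1}(matrix_sum_delta M) mulmx_sumr mulmx_suml.
  apply: eq_bigr => i _; rewrite mulmx_sumr mulmx_suml; apply: eq_bigr => j _.
  by rewrite -scalemxAr -scalemxAl.
rewrite e; apply: (@cvg_bigsum _ (nbhs M0) (nbhs_filter M0)) => i.
apply: (@cvg_bigsum _ (nbhs M0) (nbhs_filter M0)) => j.
apply: cvgZr_tmp.
exact: (@coord_continuous K n p i j M0).
Qed.

Lemma is_derive_mulmx (K : numFieldType) (V : normedModType K) (m n p q : nat)
  (B : 'M[K]_(m, n)) (C : 'M[K]_(p, q)) (f : V -> 'M[K]_(n, p)) x v df :
  is_derive x v f df -> is_derive x v (fun t => B *m f t *m C) (B *m df *m C).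
Proof.
move=> [d1 d2].
have hq : (fun h => h^-1 *: (((fun t => B *m f t *m C) \o shift x) (h *: v)
             - B *m f x *m C)) @ 0^' --> B *m df *m C.
  have -> : (fun h => h^-1 *: (((fun t => B *m f t *m C) \o shift x) (h *: v)
             - B *m f x *m C)) = (fun M => B *m M *m C) \o
            (fun h => h^-1 *: ((f \o shift x) (h *: v) - f x)).
    apply: funext => h /=.
    by rewrite -mulmxBl -mulmxBr scalemxAl scalemxAr.
  apply: continuous_cvg; first exact: mulmx_cont.
  by rewrite -d2; exact: d1.
apply: DeriveDef; first by apply/cvg_ex; exists (B *m df *m C).
exact: cvg_lim hq.
Qed.

Lemma lie_conj (R : realType) r (G : set 'M[R[i]]_r) (A X : 'M[R[i]]_r) :
  matrix_group G -> G A -> lie_tangent G X -> lie_tangent G (invmx A *m X *m A).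
Proof.
move=> [hu [h1 [hM hV]]] GA [gamma [g0 [gn gd]]].
exists (fun t => invmx A *m gamma t *m A); split.
  by rewrite g0 mulmx1 mulVmx // hu.
split; last exact: is_derive_mulmx.
apply: (filterS _ gn) => t Gt; exact: (hM _ _ (hM _ _ (hV _ GA) Gt) GA).
Qed.

Lemma memv_v2r (K : fieldType) (vT : vectType K) (U : {vspace vT}) (v : vT) :
  (v \in U) = (v2r v <= vs2mx U)%MS.
Proof. by rewrite memvE /subsetv /vline mx2vsK. Qed.

Definition pv (K : fieldType) (r : nat) (P : 'M[{poly K}]_r) :
  'rV[{poly K}]_(dim 'M[K]_r) :=
  \sum_a \sum_b P a b *: map_mx polyC (v2r (delta_mx a b : 'M[K]_r)).
Arguments pv {K r}.

Lemma pv_eval (K : fieldType) (r : nat) (P : 'M[{poly K}]_r) x :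
  map_mx (horner_eval x) (pv P) = v2r (map_mx (horner_eval x) P).
Proof.
rewrite [in RHS](matrix_sum_delta (map_mx _ P)) !linear_sum /=.
apply/rowP => j; rewrite /pv mxE horner_evalE !summxE horner_sum.
apply: eq_bigr => a _.
rewrite linear_sum !summxE horner_sum; apply: eq_bigr => b _.
by rewrite linearZ /= !mxE hornerM hornerC horner_evalE.
Qed.

Lemma eval_comb (K : fieldType) m n (beta : 'I_n -> {poly K})
    (w : 'I_n -> 'rV[{poly K}]_m) x :
  map_mx (horner_eval x) (\sum_k beta k *: w k) =
  \sum_k (beta k).[x] *: map_mx (horner_eval x) (w k).
Proof.
by apply/rowP => j; rewrite !mxE horner_evalE !summxE horner_sum; apply: eq_bigr => k _;
  rewrite !mxE horner_evalE hornerM.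
Qed.

Lemma eval_polyC_mx (K : fieldType) m n (L : 'M[K]_(m, n)) x :
  map_mx (horner_eval x) (map_mx polyC L) = L.
Proof. by apply/matrixP => a b; rewrite !mxE /= horner_evalE hornerC. Qed.

Arguments rational_mul {K m n p U f g}.
Arguments rational_1 {K n U}.
Arguments poly_eq0_open {K U x0 p}.
Arguments poly_dep {K m n L p}.
Arguments invmxM' {K n A B}.

Theorem mainTheorem8 (R : realType) (r : nat)
  (G : set 'M[R[i]]_r) (g : {vspace 'M[R[i]]_r})
  (U : set R[i])
  (D Psi Rf : int -> R[i] -> 'M[R[i]]_r) :
  matrix_group G ->
  (forall X, X \in g <-> lie_tangent G X) ->
  open (U : set (R[i])^o) -> connected (U : set (R[i])^o) ->
  (forall N, rational_mx_on U (D N)) ->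
  (forall N x, U x -> D N x \in g) ->
  (forall N x, U x -> G (Psi N x)) ->
  (forall N x, U x ->
     is_derive (x : (R[i])^o) (1 : R[i]) (Psi N) (D N x *m Psi N x)) ->
  (forall N, rational_mx_on U (Rf N)) ->
  (forall N, rational_mx_on U (fun x => invmx (Rf N x))) ->
  (forall N x, U x -> Rf N x \in unitmx) ->
  (forall N x, U x -> Psi (N + 1) x = Rf N x *m Psi N x) ->
  forall N : int,
  exists alpha : 'I_(\dim g).+1 -> {poly R[i]},
    (exists k, alpha k != 0) /\
    (forall x, U x ->
       \sum_(k < (\dim g).+1) (alpha k).[x] *: Dk D Rf N k x = 0) /\
    (forall E, E \in g -> forall x, U x ->
       \sum_(k < (\dim g).+1) (alpha k).[x] * W1 D Psi (N + k%:Z) E x = 0).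

Proof.
move=> hG hg oU _ hDrat hDg hPsiG _ hRrat hRinvrat hRu hPsi N.
have [hu [h1 [hM hV]]] := hG.
have [[x0 Ux0]|U0] := pselect (exists x, U x); last first.
  exists (fun _ => 1); split; first by exists ord0; exact: oner_neq0.
  by split => [x Ux|E _ x Ux]; exfalso; apply: U0; exists x.
set n := \dim g.
have eS : forall k : nat, N + k.+1%:Z = N + k%:Z + 1.
  by move=> k; rewrite -addn1 PoszD addrA.
have Rpu : forall k x, U x -> Rprod Rf N k x \in unitmx.
  move=> k x Ux; elim: k => [|k IH] /=; first exact: unitmx1.
  by rewrite unitmx_mul hRu.
have PsiU : forall M x, U x -> Psi M x \in unitmx.
  by move=> M x Ux; apply: hu; apply: hPsiG.
have RG : forall M x, U x -> G (Rf M x).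
  move=> M x Ux.
  have -> : Rf M x = Psi (M + 1) x *m invmx (Psi M x).
    by rewrite hPsi // mulmxK // PsiU.
  apply: hM; first exact: hPsiG.
  exact/hV/hPsiG.
have RpG : forall k x, U x -> G (Rprod Rf N k x).
  move=> k x Ux; elim: k => [|k IH] /=; first exact: h1.
  by apply: hM => //; apply: RG.
have PsiE : forall k x, U x -> Psi (N + k%:Z) x = Rprod Rf N k x *m Psi N x.
  move=> k x Ux; elim: k => [|k IH]; first by rewrite addr0 /= mul1mx.
  by rewrite eS hPsi // IH /= mulmxA.
have Dkg : forall k x, U x -> Dk D Rf N k x \in g.
  move=> k x Ux; apply/hg; rewrite /Dk; apply: lie_conj => //; first exact: RpG.
  by apply/hg; apply: hDg.
have rat_ext : forall (f h : R[i] -> 'M[R[i]]_r),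
    (forall x, U x -> f x = h x) -> rational_mx_on U f -> rational_mx_on U h.
  move=> f h efh [P [q [q0 hq]]]; exists P, q; split => // x Ux.
  by have [a b] := hq x Ux; split => //; rewrite -efh.
have Rprat : forall k, rational_mx_on U (Rprod Rf N k).
  elim=> [|k IH].
    by apply: (rat_ext _ _ _ rational_1) => x _.
  by apply: (rat_ext _ _ _ (rational_mul (hRrat (N + k%:Z)) IH)) => x _.
have Rpirat : forall k, rational_mx_on U (fun x => invmx (Rprod Rf N k x)).
  elim=> [|k IH].
    by apply: (rat_ext _ _ _ rational_1) => x _ /=; rewrite invmx1.
  apply: (rat_ext _ _ _ (rational_mul IH (hRinvrat (N + k%:Z)))) => x Ux /=.
  by rewrite invmxM' // ?hRu // Rpu.
have Dkrat : forall k, rational_mx_on U (fun x => Dk D Rf N k x).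
  move=> k; rewrite /Dk.
  exact: (rational_mul (rational_mul (Rpirat k) (hDrat _)) (Rprat k)).
have ex : forall k : 'I_n.+1, exists PQ : 'M[{poly R[i]}]_r * {poly R[i]},
    PQ.2 != 0 /\ forall x, U x -> PQ.2.[x] != 0 /\
      Dk D Rf N k x = PQ.2.[x]^-1 *: map_mx (fun p => p.[x]) PQ.1.
  by move=> k; have [P [q hq]] := Dkrat k; exists (P, q).
have [PQ hPQ] := choice ex.
pose Pk k := (PQ k).1.
pose qk k := (PQ k).2.
have PkE : forall k x, U x ->
    map_mx (horner_eval x) (Pk k) = (qk k).[x] *: Dk D Rf N k x.
  move=> k x Ux; have [_ /(_ x Ux) [qx ->]] := hPQ k.
  by rewrite scalerA mulfV // scale1r.
pose L := cokermx (vs2mx g).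
have hp : forall k, pv (Pk k) *m map_mx polyC L = 0.
  move=> k; apply/matrixP => i j; rewrite [RHS]mxE.
  apply: (poly_eq0_open oU Ux0) => x Ux.
  have e : map_mx (horner_eval x) (pv (Pk k) *m map_mx polyC L) = 0.
    rewrite map_mxM eval_polyC_mx pv_eval PkE // linearZ /= -scalemxAl.
    have := Dkg k x Ux; rewrite memv_v2r submxE => /eqP ->.
    by rewrite scaler0.
  by move/matrixP/(_ i j): e; rewrite !mxE horner_evalE.
have hrk : (dim 'M[R[i]]_r - \rank L <= n)%N.
  rewrite /L mxrank_coker subKn; first exact: leqnn.
  exact: rank_leq_col.
have [beta [[k0 bk0] hb]] := poly_dep hrk hp.
exists (fun k => beta k * qk k); split.
  exists k0; rewrite mulf_neq0 //; by have [] := hPQ k0.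
have hsum : forall x, U x ->
    \sum_k (beta k * qk k).[x] *: Dk D Rf N k x = 0.
  move=> x Ux; apply: v2r_inj; rewrite linear0 linear_sum /=.
  have e := congr1 (map_mx (horner_eval x)) hb.
  rewrite eval_comb map_mx0 in e; apply: (eq_trans _ e); apply: eq_bigr => k _.
  by rewrite pv_eval PkE // hornerM -scalerA linearZ.
split; first exact: hsum.
move=> E _ x Ux.
have eW : forall k : 'I_n.+1,
    W1 D Psi (N + k%:Z) E x = \tr (Dk D Rf N k x *m Mfun Psi N E x).
  move=> k; rewrite /W1 /Mfun /Dk (PsiE k x Ux) (invmxM' (Rpu k x Ux) (PsiU N x Ux)).
  by rewrite !mulmxA mxtrace_mulC !mulmxA.
under eq_bigr do rewrite eW.
have -> : \sum_k (beta k * qk k).[x] * \tr (Dk D Rf N k x *m Mfun Psi N E x)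
    = \tr ((\sum_k (beta k * qk k).[x] *: Dk D Rf N k x) *m Mfun Psi N E x).
  rewrite mulmx_suml linear_sum; apply: eq_bigr => k _.
  by rewrite -scalemxAl linearZ.
by rewrite hsum // mul0mx mxtrace0.
Qed.
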